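(* Fix the uniform prior $P$ on $\{1,\dots,n\}^T$, a utility function $u:\mathcal{Z}\times\mathcal{H}\to\mathbb{R}$, an amplitude $\lambda\ge0$ and a decay $\gamma\in(0,1)$. If Adaptive Sampling SGD is run for $T$ iterations, its posterior $Q$ satisfies $$D_{KL}(Q\|P)\le\sum_{t=2}^T\mathbb{E}_{(i_1,\dots,i_t)\sim Q}\frac{\lambda}{n}\sum_{i=1}^n\Bigg[\sum_{j=1}^{N_{i_t,t}}u(z_{i_t},h_{\tau_{i_t,j}})\gamma^{N_{i_t,t}-j}-\sum_{k=1}^{N_{i,t}}u(z_i,h_{\tau_{i,k}})\gamma^{N_{i,t}-k}\Bigg].$$
   Context: Adaptive Sampling SGD: inputs are examples $(z_1,\dots,z_n)\in\mathcal{Z}^n$, an initial hypothesis $h_0\in\mathcal{H}$, update rules $G_t:\mathcal{H}\times\mathcal{Z}\to\mathcal{H}$, utility $u$, amplitude $\lambda$, decay $\gamma$. Initialize weights $w_1=\dots=w_n=1$. For $t=1,\dots,T$: draw $i_t$ with conditional probability $Q_t(i)=Q(i_t=i\mid i_1,\dots,i_{t-1})=w_i/\sum_{j=1}^nw_j$; set $h_t=G_t(h_{t-1},z_{i_t})$; update $w_{i_t}\leftarrow w_{i_t}^{\gamma}\exp(\lambda u(z_{i_t},h_t))$. Output $h_T$. The posterior $Q$ is the resulting distribution of $(i_1,\dots,i_T)$ on $\{1,\dots,n\}^T$; $D_{KL}(Q\|P)=\mathbb{E}_{Q}\ln(Q/P)$. Notation: $N_{i,t}=|\{t'<t: i_{t'}=i\}|$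 is the number of times index $i$ was chosen before iteration $t$; $\tau_{i,j}$ is the $j$-th iteration at which $i$ was chosen. Sums with upper limit $0$ are $0$. *)

(* Defs.v *)
From Stdlib Require Import Reals List Arith.
Import ListNotations.
Open Scope R_scope.

(* Conventions: examples are indexed 0..n-1 (paper: 1..n), iterations are
   numbered 1..T as in the paper.  A run of the algorithm is determined by the
   sequence s = [i_1; ...; i_T] of chosen indices. *)

Definition sumR (f : nat -> R) (l : list nat) : R := fold_right Rplus 0 (map f l).
Definition prodR (f : nat -> R) (l : list nat) : R := fold_right Rmult 1 (map f l).

Fixpoint run_h {Z H : Type} (G : nat -> H -> Z -> H) (z : nat -> Z)
  (t : nat) (h : H) (s : list nat) : H :=
  match s with
  | [] => h
  | i :: s' => run_h G z (S t) (G t h (z i)) s'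
  end.

Definition hyp_at {Z H : Type} (G : nat -> H -> Z -> H) (z : nat -> Z) (h0 : H)
  (s : list nat) (k : nat) : H := run_h G z 1 h0 (firstn k s).

Fixpoint run_w {Z H : Type} (G : nat -> H -> Z -> H) (z : nat -> Z)
  (u : Z -> H -> R) (lam gam : R)
  (t : nat) (h : H) (w : nat -> R) (s : list nat) : nat -> R :=
  match s with
  | [] => w
  | i :: s' =>
      let h' := G t h (z i) in
      run_w G z u lam gam (S t) h'
        (fun j => if Nat.eqb j i then Rpower (w j) gam * exp (lam * u (z i) h') else w j) s'
  end.

Definition weights_at {Z H : Type} (G : nat -> H -> Z -> H) (z : nat -> Z)
  (u : Z -> H -> R) (lam gam : R) (h0 : H) (s : list nat) (t : nat) : nat -> R :=
  run_w G z u lam gam 1 h0 (fun _ => 1) (firstn (t - 1) s).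

Fixpoint all_seqs (n T : nat) : list (list nat) :=
  match T with
  | O => [[]]
  | S T' => flat_map (fun s => map (fun i => i :: s) (seq 0 n)) (all_seqs n T')
  end.

Definition posterior {Z H : Type} (G : nat -> H -> Z -> H) (z : nat -> Z)
  (u : Z -> H -> R) (lam gam : R) (h0 : H) (n T : nat) (s : list nat) : R :=
  prodR (fun t =>
           let w := weights_at G z u lam gam h0 s t in
           w (nth (t - 1) s 0%nat) / sumR w (seq 0 n)) (seq 1 T).

Definition uniform_prior (n T : nat) (s : list nat) : R := / (INR n ^ T).

Definition KL (n T : nat) (Q P : list nat -> R) : R :=
  fold_right Rplus 0 (map (fun s => Q s * ln (Q s / P s)) (all_seqs n T)).

Definition Ncount (s : list nat) (i t : nat) : nat :=
  count_occ Nat.eq_dec (firstn (t - 1) s) i.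

Fixpoint nth_occ (s : list nat) (i j pos : nat) : nat :=
  match s with
  | [] => O
  | x :: s' =>
      if Nat.eqb x i then
        (if Nat.eqb j 1 then pos else nth_occ s' i (j - 1) (S pos))
      else nth_occ s' i j (S pos)
  end.

Definition tau (s : list nat) (i j : nat) : nat := nth_occ s i j 1.

Definition accum {Z H : Type} (G : nat -> H -> Z -> H) (z : nat -> Z)
  (u : Z -> H -> R) (gam : R) (h0 : H) (s : list nat) (t i : nat) : R :=
  let N := Ncount s i t in
  sumR (fun j => u (z i) (hyp_at G z h0 s (tau s i j)) * gam ^ (N - j)) (seq 1 N).

(* Main.v *)
Require Import Defs.
From Stdlib Require Import Reals List Arith Lia Lra.
Import ListNotations.
Open Scope R_scope.

Lemma sumR_app f l1 l2 : sumR f (l1 ++ l2) = sumR f l1 + sumR f l2.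
Proof. induction l1; simpl; unfold sumR in *; simpl; [lra|]. rewrite IHl1; lra. Qed.

Lemma sumR_ext f g l : (forall x, In x l -> f x = g x) -> sumR f l = sumR g l.
Proof. intros; unfold sumR; f_equal; apply map_ext_in; auto. Qed.

Lemma sumR_scal c f l : c * sumR f l = sumR (fun x => c * f x) l.
Proof. induction l; unfold sumR in *; simpl; [lra|]. rewrite <- IHl; lra. Qed.

Lemma sumR_minus f g l : sumR (fun x => f x - g x) l = sumR f l - sumR g l.
Proof. induction l; unfold sumR in *; simpl; [lra|]. rewrite IHl; lra. Qed.

Lemma sumR_const c l : sumR (fun _ => c) l = INR (length l) * c.
Proof. induction l; unfold sumR in *; simpl; [lra|]. rewrite IHl; destruct (length l); simpl; lra. Qed.

Lemma sumR_le f g l : (forall x, In x l -> f x <= g x) -> sumR f l <= sumR g l.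
Proof. induction l; unfold sumR in *; simpl; intros; [lra|].
  apply Rplus_le_compat; auto. Qed.

Lemma nth_occ_bounds p i j pos : (1 <= j <= count_occ Nat.eq_dec p i)%nat ->
  (pos <= nth_occ p i j pos < pos + length p)%nat.
Proof.
  revert j pos; induction p as [|x p IH]; simpl; intros j pos Hj; [lia|].
  destruct (Nat.eq_dec x i) as [e|ne].
  - subst. rewrite Nat.eqb_refl. destruct (Nat.eqb_spec j 1); [lia|].
    specialize (IH (j-1)%nat (S pos)); lia.
  - apply Nat.eqb_neq in ne; rewrite ne. specialize (IH j (S pos)); lia.
Qed.

Lemma nth_occ_app p q i j pos : (1 <= j <= count_occ Nat.eq_dec p i)%nat ->
  nth_occ (p ++ q) i j pos = nth_occ p i j pos.
Proof.
  revert j pos; induction p as [|x p IH]; simpl; intros j pos Hj; [lia|].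
  destruct (Nat.eq_dec x i) as [e|ne].
  - subst. rewrite Nat.eqb_refl. destruct (Nat.eqb_spec j 1); [auto|].
    apply IH; lia.
  - apply Nat.eqb_neq in ne; rewrite ne. apply IH; lia.
Qed.

Lemma nth_occ_last p i pos :
  nth_occ (p ++ [i]) i (S (count_occ Nat.eq_dec p i)) pos = (pos + length p)%nat.
Proof.
  revert pos; induction p as [|x p IH]; simpl; intros pos.
  - rewrite Nat.eqb_refl; simpl; lia.
  - destruct (Nat.eq_dec x i) as [e|ne].
    + subst x. rewrite Nat.eqb_refl. simpl. replace (count_occ Nat.eq_dec p i - 0)%nat with (count_occ Nat.eq_dec p i) by lia.
      rewrite IH; lia.
    + apply Nat.eqb_neq in ne as ne'; rewrite ne'. rewrite IH; lia.
Qed.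

Lemma run_h_app {Z H : Type} (G : nat -> H -> Z -> H) z t h p q :
  run_h G z t h (p ++ q) = run_h G z (t + length p) (run_h G z t h p) q.
Proof. revert t h; induction p; simpl; intros; [f_equal; lia|].
  rewrite IHp; f_equal; lia. Qed.

Lemma run_w_app {Z H : Type} (G : nat -> H -> Z -> H) z u lam gam t h w p q :
  run_w G z u lam gam t h w (p ++ q) =
  run_w G z u lam gam (t + length p) (run_h G z t h p) (run_w G z u lam gam t h w p) q.
Proof. revert t h w; induction p; simpl; intros; [f_equal; lia|].
  rewrite IHp; f_equal; lia. Qed.

Definition accP {Z H : Type} (G : nat -> H -> Z -> H) (z : nat -> Z)
  (u : Z -> H -> R) (gam : R) (h0 : H) (p : list nat) (i : nat) : R :=
  let N := count_occ Nat.eq_dec p i in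
  sumR (fun j => u (z i) (run_h G z 1 h0 (firstn (nth_occ p i j 1) p)) * gam ^ (N - j)) (seq 1 N).

Lemma accum_accP {Z H : Type} (G : nat -> H -> Z -> H) z u gam h0 s t i :
  accum G z u gam h0 s t i = accP G z u gam h0 (firstn (t-1) s) i.
Proof.
  unfold accum, accP, Ncount. apply sumR_ext. intros j Hj. apply in_seq in Hj.
  unfold tau, hyp_at.
  set (p := firstn (t-1) s) in *.
  assert (E : s = p ++ skipn (t-1) s) by (symmetry; apply firstn_skipn).
  rewrite E at 1. rewrite nth_occ_app by lia.
  pose proof (nth_occ_bounds p i j 1 ltac:(lia)).
  f_equal. f_equal. f_equal. unfold p. rewrite firstn_firstn. f_equal.
  pose proof (firstn_le_length (t-1) s). unfold p in *. lia.
Qed.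

Lemma run_w_pos {Z H : Type} (G : nat -> H -> Z -> H) z u lam gam t h w p :
  (forall j, 0 < w j) -> forall j, 0 < run_w G z u lam gam t h w p j.
Proof. revert t h w; induction p; simpl; intros; auto.
  apply IHp. intros k. destruct (k =? a)%nat; auto.
  apply Rmult_lt_0_compat; [unfold Rpower; apply exp_pos| apply exp_pos]. Qed.

Lemma ln_weights {Z H : Type} (G : nat -> H -> Z -> H) z u lam gam h0 p i :
  ln (run_w G z u lam gam 1 h0 (fun _ => 1) p i) = lam * accP G z u gam h0 p i.
Proof.
  induction p as [|x p IH] using rev_ind.
  - simpl. unfold accP; simpl. rewrite ln_1. unfold sumR; simpl. lra.
  - rewrite run_w_app. simpl.
    pose proof (run_w_pos G z u lam gam 1 h0 (fun _ => 1) p ltac:(intros; lra)) as Hpos.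
    destruct (Nat.eqb_spec i x) as [e|ne].
    + subst x. rewrite ln_mult by (unfold Rpower; apply exp_pos).
      unfold Rpower. rewrite !ln_exp. rewrite IH.
      unfold accP. rewrite count_occ_app. simpl. destruct (Nat.eq_dec i i); [|congruence].
      replace (count_occ Nat.eq_dec p i + 1)%nat with (S (count_occ Nat.eq_dec p i)) by lia.
      rewrite seq_S, sumR_app. unfold sumR at 3; simpl map; simpl fold_right.
      replace (1 + count_occ Nat.eq_dec p i)%nat with (S (count_occ Nat.eq_dec p i)) by lia.
      rewrite nth_occ_last. rewrite Nat.sub_diag.
      rewrite firstn_all2 by (rewrite length_app; simpl; lia).
      rewrite run_h_app. simpl run_h.
      replace (1 + length p)%nat with (S (length p)) by lia.
      set (N := count_occ Nat.eq_dec p i).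
      assert (Hs : sumR (fun j => u (z i) (run_h G z 1 h0 (firstn (nth_occ (p ++ [i]) i j 1) (p ++ [i]))) * gam ^ (S N - j)) (seq 1 N)
        = gam * sumR (fun j => u (z i) (run_h G z 1 h0 (firstn (nth_occ p i j 1) p)) * gam ^ (N - j)) (seq 1 N)).
      { rewrite sumR_scal. apply sumR_ext. intros j Hj. apply in_seq in Hj. unfold N in *.
      rewrite nth_occ_app by lia.
      pose proof (nth_occ_bounds p i j 1 ltac:(lia)).
      rewrite firstn_app. replace (nth_occ p i j 1 - length p)%nat with 0%nat by lia.
      rewrite app_nil_r.
      replace (S (count_occ Nat.eq_dec p i) - j)%nat with (S (count_occ Nat.eq_dec p i - j)) by lia.
      simpl. ring. }
      rewrite Hs. simpl. ring.
    + rewrite IH. unfold accP. rewrite count_occ_app. simpl.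
      destruct (Nat.eq_dec x i); [congruence|]. rewrite Nat.add_0_r.
      f_equal. apply sumR_ext. intros j Hj. apply in_seq in Hj.
      rewrite nth_occ_app by lia.
      pose proof (nth_occ_bounds p i j 1 ltac:(lia)).
      rewrite firstn_app. replace (nth_occ p i j 1 - length p)%nat with 0%nat by lia.
      rewrite app_nil_r. reflexivity.
Qed.

Lemma sumR_plus f g l : sumR (fun x => f x + g x) l = sumR f l + sumR g l.
Proof. induction l; unfold sumR in *; simpl; [lra|]. rewrite IHl; lra. Qed.

Lemma ln_le' x y : 0 < x -> x <= y -> ln x <= ln y.
Proof. intros Hx Hxy. destruct (Rle_lt_or_eq _ _ Hxy) as [h|h].
  - left; apply ln_increasing; auto.
  - subst; lra. Qed.

Lemma jensen (f : nat -> R) l : (0 < length l)%nat ->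
  sumR f l / INR (length l) <= ln (sumR (fun j => exp (f j)) l / INR (length l)).
Proof.
  intros Hl. set (k := INR (length l)). assert (Hk : 0 < k) by (apply lt_0_INR; auto).
  set (m := sumR f l / k).
  assert (Hs : sumR (fun j => exp m * (1 + (f j - m))) l <= sumR (fun j => exp (f j)) l).
  { apply sumR_le. intros x _. replace (exp (f x)) with (exp m * exp (f x - m)).
    2:{ rewrite <- exp_plus; f_equal; ring. }
    apply Rmult_le_compat_l; [left; apply exp_pos| apply exp_ineq1_le]. }
  assert (Hc : sumR (fun j => exp m * (1 + (f j - m))) l = exp m * k).
  { rewrite <- sumR_scal. rewrite sumR_plus, sumR_minus, !sumR_const. fold k.
    unfold m. field. lra. }
  rewrite Hc in Hs.
  replace m with (ln (exp m)) at 1 by apply ln_exp.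
  apply ln_le'; [apply exp_pos|].
  apply (Rmult_le_reg_r k); auto. unfold Rdiv; rewrite Rmult_assoc, Rinv_l by lra. lra.
Qed.

Lemma weights_exp {Z H : Type} (G : nat -> H -> Z -> H) z u lam gam h0 s t j :
  weights_at G z u lam gam h0 s t j = exp (lam * accum G z u gam h0 s t j).
Proof.
  unfold weights_at. rewrite accum_accP, <- ln_weights. rewrite exp_ln; auto.
  apply run_w_pos; intros; lra.
Qed.

Lemma term_bound {Z H : Type} (G : nat -> H -> Z -> H) z u lam gam h0 s t n i :
  (0 < n)%nat ->
  let w := weights_at G z u lam gam h0 s t in
  ln (INR n * (w i / sumR w (seq 0 n))) <=
  lam / INR n * sumR (fun j => accum G z u gam h0 s t i - accum G z u gam h0 s t j) (seq 0 n).
Proof.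
  intros Hn w. set (a := accum G z u gam h0 s t).
  assert (Hw : forall j, w j = exp (lam * a j)) by (intros; apply weights_exp).
  rewrite (sumR_ext w (fun j => exp (lam * a j))) by auto. rewrite Hw.
  pose proof (jensen (fun j => lam * a j) (seq 0 n)) as J. rewrite length_seq in J.
  specialize (J Hn).
  assert (Hk : 0 < INR n) by (apply lt_0_INR; auto).
  set (S := sumR (fun j => exp (lam * a j)) (seq 0 n)) in *.
  assert (HS0 : 0 < S).
  { unfold S. destruct n as [|n']; [lia|]. rewrite <- cons_seq. unfold sumR; simpl.
    pose proof (sumR_le (fun _ => 0) (fun j => exp (lam * a j)) (seq 1 n') ltac:(intros; left; apply exp_pos)) as L.
    rewrite sumR_const in L. unfold sumR in L. pose proof (exp_pos (lam * a 0%nat)). lra. }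
  replace (INR n * (exp (lam * a i) / S)) with (exp (lam * a i) * / (S / INR n)) by (field; lra).
  rewrite ln_mult by (try apply exp_pos; apply Rinv_0_lt_compat; apply Rdiv_lt_0_compat; lra).
  rewrite ln_exp, ln_Rinv by (apply Rdiv_lt_0_compat; lra).
  rewrite sumR_minus, sumR_const, length_seq, <- sumR_scal in *.
  replace (lam / INR n * (INR n * a i - sumR a (seq 0 n))) with (lam * a i - lam * sumR a (seq 0 n) / INR n) by (field; lra).
  lra.
Qed.

Lemma prodR_pos q l : (forall t, In t l -> 0 < q t) -> 0 < prodR q l.
Proof. induction l; unfold prodR in *; simpl; intros; [lra|].
  apply Rmult_lt_0_compat; auto. Qed.

Lemma ln_prod q l c : 0 < c -> (forall t, In t l -> 0 < q t) ->
  ln (prodR q l * c ^ length l) = sumR (fun t => ln (c * q t)) l.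
Proof. intros Hc; induction l; unfold prodR, sumR in *; simpl; intros Hq.
  - rewrite Rmult_1_r; apply ln_1.
  - replace (q a * fold_right Rmult 1 (map q l) * (c * c ^ length l)) with
      ((c * q a) * (fold_right Rmult 1 (map q l) * c ^ length l)) by ring.
    rewrite ln_mult.
    + rewrite IHl; auto.
    + apply Rmult_lt_0_compat; auto.
    + apply Rmult_lt_0_compat; [apply (prodR_pos q l); auto| apply pow_lt; auto].
Qed.

Lemma sumR_pos_seq f n : (0 < n)%nat -> (forall j, 0 < f j) -> 0 < sumR f (seq 0 n).
Proof. intros Hn Hf. destruct n as [|n']; [lia|]. rewrite <- cons_seq. unfold sumR; simpl.
    pose proof (sumR_le (fun _ => 0) f (seq 1 n') ltac:(intros; left; auto)) as L.
    rewrite sumR_const in L. unfold sumR in L. pose proof (Hf 0%nat). lra. Qed.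

Definition sumL {A} (f : A -> R) (l : list A) : R := fold_right Rplus 0 (map f l).

Lemma sumL_swap (F : nat -> list nat -> R) (lt : list nat) (L : list (list nat)) :
  sumL (fun s => sumR (fun t => F t s) lt) L = sumR (fun t => sumL (F t) L) lt.
Proof. induction L as [|s L IH].
  - unfold sumL at 1; simpl. rewrite (sumR_ext _ (fun _ => 0)) by (intros; reflexivity).
    rewrite sumR_const; lra.
  - change (sumL (fun s0 => sumR (fun t => F t s0) lt) (s :: L)) with
      (sumR (fun t => F t s) lt + sumL (fun s0 => sumR (fun t => F t s0) lt) L).
    rewrite IH, <- sumR_plus. apply sumR_ext. intros; reflexivity.
Qed.

Lemma sumL_le {A} (f g : A -> R) l : (forall x, In x l -> f x <= g x) -> sumL f l <= sumL g l.
Proof. induction l; unfold sumL in *; simpl; intros; [lra|].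
  apply Rplus_le_compat; auto. Qed.

Lemma all_seqs_n (n T : nat) s : In s (all_seqs n T) -> T = 0%nat \/ (0 < n)%nat.
Proof. destruct T; simpl; auto. intros Hs. apply in_flat_map in Hs as [s' [_ Hs]].
  apply in_map_iff in Hs as [i [_ Hi]]. apply in_seq in Hi. lia. Qed.

Lemma pointwise (Z H : Type) (n T : nat) (z : nat -> Z) (h0 : H)
  (G : nat -> H -> Z -> H) (u : Z -> H -> R) (lam gam : R) s :
  (T = 0%nat \/ (0 < n)%nat) ->
  posterior G z u lam gam h0 n T s * ln (posterior G z u lam gam h0 n T s / uniform_prior n T s)
  <= posterior G z u lam gam h0 n T s *
     sumR (fun t => lam / INR n *
                  sumR (fun i =>
                          accum G z u gam h0 s t (nth (t - 1) s 0%nat)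
                          - accum G z u gam h0 s t i) (seq 0 n)) (seq 2 (T - 1)).
Proof.
  intros [HT|Hn].
  - subst T. simpl. unfold posterior, uniform_prior; simpl. unfold prodR; simpl.
    replace (1 / / 1) with 1 by field. rewrite ln_1. unfold sumR; simpl. lra.
  - set (q := fun t => let w := weights_at G z u lam gam h0 s t in
           w (nth (t - 1) s 0%nat) / sumR w (seq 0 n)).
    assert (Hq : forall t, 0 < q t).
    { intros t. unfold q. apply Rdiv_lt_0_compat.
      - rewrite weights_exp; apply exp_pos.
      - apply sumR_pos_seq; auto. intros; rewrite weights_exp; apply exp_pos. }
    assert (HQ : posterior G z u lam gam h0 n T s = prodR q (seq 1 T)) by reflexivity.
    rewrite HQ. apply Rmult_le_compat_l; [left; apply prodR_pos; auto|].
    assert (Hk : 0 < INR n) by (apply lt_0_INR; auto).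
    unfold uniform_prior. unfold Rdiv. rewrite Rinv_inv.
    replace T with (length (seq 1 T)) at 2 by apply length_seq.
    rewrite ln_prod by auto.
    destruct T as [|T'].
    + simpl. unfold sumR; simpl; lra.
    + rewrite <- cons_seq. simpl (S T' - 1)%nat. rewrite Nat.sub_0_r.
      change (sumR (fun t => ln (INR n * q t)) (1%nat :: seq 2 T')) with
        (ln (INR n * q 1%nat) + sumR (fun t => ln (INR n * q t)) (seq 2 T')).
      assert (H1 : ln (INR n * q 1%nat) <= 0).
      { pose proof (term_bound G z u lam gam h0 s 1%nat n (nth 0 s 0%nat) Hn) as TB.
        simpl in TB. unfold q. simpl.
        rewrite (sumR_ext (fun j => accum G z u gam h0 s 1 (nth 0 s 0%nat) - accum G z u gam h0 s 1 j) (fun _ => 0)) in TB.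
        - rewrite sumR_const in TB. rewrite Rmult_0_r, Rmult_0_r in TB. exact TB.
        - intros. unfold accum, Ncount. simpl. unfold sumR; simpl. ring. }
      assert (H2 : sumR (fun t => ln (INR n * q t)) (seq 2 T') <=
        sumR (fun t => lam / INR n * sumR (fun i =>
                          accum G z u gam h0 s t (nth (t - 1) s 0%nat)
                          - accum G z u gam h0 s t i) (seq 0 n)) (seq 2 T')).
      { apply sumR_le. intros t _. apply term_bound; auto. }
      lra.
Qed.

Theorem theorem4 (Z H : Type) (n T : nat) (z : nat -> Z) (h0 : H)
  (G : nat -> H -> Z -> H) (u : Z -> H -> R) (lam gam : R)
  (Hlam : 0 <= lam) (Hgam : 0 < gam < 1) :
  KL n T (posterior G z u lam gam h0 n T) (uniform_prior n T)
  <= sumR (fun t =>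
       fold_right Rplus 0
         (map (fun s =>
                 posterior G z u lam gam h0 n T s *
                 (lam / INR n *
                  sumR (fun i =>
                          accum G z u gam h0 s t (nth (t - 1) s 0%nat)
                          - accum G z u gam h0 s t i) (seq 0 n)))
              (all_seqs n T)))
     (seq 2 (T - 1)).
Proof.
  unfold KL.
  change (fold_right Rplus 0 (map ?f (all_seqs n T))) with (sumL f (all_seqs n T)).
  change (fun t => sumL ?F (all_seqs n T)) with (fun t => sumL (F t) (all_seqs n T)).
  rewrite <- sumL_swap.
  apply sumL_le. intros s Hs.
  rewrite <- sumR_scal. apply pointwise. eapply all_seqs_n; eauto.
Qed.
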